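(* Let $X$ be a Banach lattice, $E$ a Banach space and $Y$ a Banach sequence lattice. Then every bounded finite rank operator $S:X\to E$ is $Y$-concave.
   Context: All vector spaces are real. A Banach sequence lattice $Y$ is a Banach space of real sequences which is an ideal with lattice norm (if $|f|\le|g|$ coordinatewise with $g\in Y$ then $f\in Y$ and $\|f\|_Y\le\|g\|_Y$) and contains every canonical unit vector $e_n$; $\|\cdot\|_{\mathbb{R}^n,Y}$ is its restriction to sequences supported in the first $n$ coordinates. Krivine's functional calculus: for a Banach lattice $X$ and $x\in X^n$ there is a unique linear map $\tau_{n,x}$ from the space $\mathcal{H}_n$ of continuous positively 1-homogeneous functions $\mathbb{R}^n\to\mathbb{R}$ into $X$ sending the $j$th coordinate projection to $x_j$ and preserving finite suprema. Set $\|(x_1,\dots,x_n)\|_Y:=\tau_{n,x}(\|\cdot\|_{\mathbb{R}^n,Y})\in X$, $\|x\|_{X^n,Y,\tau}:=\|\|(x_1,\dots,x_n)\|_Y\|_X$, and for a Banach space $E$, $\|(w_1,\dots,w_n)\|_{E^n,Y}:=\|(\|w_1\|_E,\dots,\|w_n\|_E)\|_{\mathbb{R}^n,Y}$. A linear $S:X\to E$ is $Y$-concave if there is $K>0$ with $\|(Sx_1,\dots,Sx_n)\|_{E^n,Y}\le K\|(x_1,\dots,x_n)\|_{X^n,Y,\tau}$ for all $n\in\mathbb{N}$ and $x_j\in X$. *)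

(* Defs.v *)
From HB Require Import structures.
From mathcomp Require Import all_boot all_order all_algebra.
From mathcomp Require Import all_classical all_reals all_analysis.
Set Implicit Arguments. Unset Strict Implicit. Unset Printing Implicit Defensive.
Import Order.TTheory GRing.Theory Num.Theory.
Import numFieldNormedType.Exports.
Local Open Scope ring_scope.
Local Open Scope classical_set_scope.

Record banach_lattice (R : realType) (X : completeNormedModType R) := BanachLattice {
  ble : X -> X -> Prop;
  ble_refl : forall x, ble x x;
  ble_trans : forall x y z, ble x y -> ble y z -> ble x z;
  ble_anti : forall x y, ble x y -> ble y x -> x = y;
  ble_add : forall x y z, ble x y -> ble (x + z) (y + z);
  ble_scale : forall (a : R) x y, 0 <= a -> ble x y -> ble (a *: x) (a *: y);
  bsup : X -> X -> X;
  bsup_ubl : forall x y, ble x (bsup x y);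
  bsup_ubr : forall x y, ble y (bsup x y);
  bsup_least : forall x y z, ble x z -> ble y z -> ble (bsup x y) z;
  bnorm_mono : forall x y, ble (bsup x (- x)) (bsup y (- y)) -> `|x| <= `|y|
}.

Definition unit_seq (R : realType) (n : nat) : nat -> R :=
  fun k => if k == n then 1 else 0.

(* A Banach sequence lattice: a linear space [ydom] of real sequences
   (pointwise operations) with a complete norm [ynorm] (meaningful on
   [ydom]), which is an ideal with lattice norm, containing every e_n. *)
Record seq_lattice (R : realType) := SeqLattice {
  ydom : set (nat -> R);
  ynorm : (nat -> R) -> R;
  ydom0 : ydom (fun _ => 0);
  ydomD : forall f g, ydom f -> ydom g -> ydom (fun k => f k + g k);
  ydomZ : forall (a : R) f, ydom f -> ydom (fun k => a * f k);
  ynorm_eq0 : forall f, ydom f -> ynorm f = 0 -> f = (fun _ => 0);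
  ynormZ : forall (a : R) f, ydom f -> ynorm (fun k => a * f k) = `|a| * ynorm f;
  ynormD : forall f g, ydom f -> ydom g ->
    ynorm (fun k => f k + g k) <= ynorm f + ynorm g;
  ycomplete : forall u : nat -> nat -> R, (forall p, ydom (u p)) ->
    (forall e : R, 0 < e -> exists N, forall p q, (N <= p)%N -> (N <= q)%N ->
        ynorm (fun k => u p k - u q k) < e) ->
    exists f, ydom f /\ (forall e : R, 0 < e -> exists N, forall p, (N <= p)%N ->
        ynorm (fun k => u p k - f k) < e);
  yideal : forall f g, ydom g -> (forall k, `|f k| <= `|g k|) ->
    ydom f /\ ynorm f <= ynorm g;
  yunit : forall n, ydom (unit_seq R n)
}.

(* Extension by zero of a vector of R^n to a sequence. *)
Definition ext0 (R : realType) (n : nat) (v : 'rV[R]_n) : nat -> R :=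
  fun k => oapp (fun i : 'I_n => v ord0 i) 0 (insub k).

Definition Ynorm_n (R : realType) (Y : seq_lattice R) (n : nat) (v : 'rV[R]_n) : R :=
  ynorm Y (ext0 v).

Definition EYnorm (R : realType) (E : normedModType R) (Y : seq_lattice R)
  (n : nat) (w : 'I_n -> E) : R :=
  Ynorm_n Y (\row_j `|w j|).

Definition Hn (R : realType) (n : nat) : set ('rV[R]_n -> R) :=
  [set f | continuous f /\
     forall (t : R) (v : 'rV[R]_n), 0 <= t -> f (t *: v) = t * f v].

(* tau is "the" Krivine calculus of x = (x_1,..,x_n): a linear map on H_n
   sending the j-th coordinate projection to x_j and preserving finite
   suprema.  (Krivine's theorem: such a tau exists and is unique.) *)
Definition is_krivine (R : realType) (X : completeNormedModType R)
  (L : banach_lattice X) (n : nat) (x : 'I_n -> X)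
  (tau : ('rV[R]_n -> R) -> X) : Prop :=
  [/\ (forall f g (a b : R), @Hn R n f -> @Hn R n g ->
         tau (fun v => a * f v + b * g v) = a *: tau f + b *: tau g),
      (forall j : 'I_n, tau (fun v => v ord0 j) = x j) &
      (forall f g, @Hn R n f -> @Hn R n g ->
         tau (fun v => Num.max (f v) (g v)) = bsup L (tau f) (tau g))].

(* Y-concavity of a linear S : X -> E.  The quantity
   ||(x_1,..,x_n)||_Y = tau_{n,x}(||.||_{R^n,Y}) is expressed through any
   (hence the unique) Krivine calculus tau of x. *)
Definition Y_concave (R : realType) (X : completeNormedModType R)
  (L : banach_lattice X) (E : completeNormedModType R) (Y : seq_lattice R)
  (S : X -> E) : Prop :=
  exists K : R, 0 < K /\
    forall (n : nat) (x : 'I_n -> X) (tau : ('rV[R]_n -> R) -> X),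
      is_krivine L x tau ->
      EYnorm Y (fun j => S (x j)) <= K * `| tau (@Ynorm_n R Y n) |.

Definition is_linear (R : realType) (X E : normedModType R) (S : X -> E) : Prop :=
  forall (a : R) x y, S (a *: x + y) = a *: S x + S y.

Definition is_bounded (R : realType) (X E : normedModType R) (S : X -> E) : Prop :=
  exists C : R, forall x, `|S x| <= C * `|x|.

Definition finite_rank (R : realType) (X E : normedModType R) (S : X -> E) : Prop :=
  exists (m : nat) (e : 'I_m -> E),
    forall x, exists c : 'I_m -> R, S x = \sum_(i < m) c i *: e i.

(* Main.v *)
Require Import Defs.
From HB Require Import structures.
From mathcomp Require Import all_boot all_order all_algebra.
From mathcomp Require Import all_classical all_reals all_analysis.
From mathcomp Require Import ring lra.
Set Implicit Arguments. Unset Strict Implicit. Unset Printing Implicit Defensive.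
Import Order.TTheory GRing.Theory Num.Theory.
Import numFieldNormedType.Exports.
Local Open Scope ring_scope.
Local Open Scope classical_set_scope.

Lemma lip_cont (R : realType) (V W : normedModType R) (f : V -> W) (k : R) :
  0 < k -> (forall x y, `|f x - f y| <= k * `|x - y|) -> continuous f.
Proof.
move=> k0 H x; apply/(@cvgrPdist_lt _ _ _ (nbhs x)) => e e0.
near=> z; apply: (le_lt_trans (H x z)).
rewrite -ltr_pdivlMl//.
near: z; apply: cvgr_dist_lt => //.
by rewrite mulr_gt0 ?invr_gt0.
Unshelve. all: by end_near. Qed.
Section Nsec.
Variables (R : realType) (Y : seq_lattice R) (n : nat).
Local Notation N := (@Ynorm_n R Y n).

Lemma entry_le (v : 'rV[R]_n) (i : 'I_n) : `|v ord0 i| <= `|v|.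
Proof.
rewrite [leRHS]/Num.norm /= mx_normrE; apply/bigmax_geP; right => /=.
by exists (ord0, i).
Qed.

Lemma ext0_lt (v : 'rV[R]_n) k (h : (k < n)%N) : ext0 v k = v ord0 (Ordinal h).
Proof. by rewrite /ext0 insubT. Qed.

Lemma ext0_ge (v : 'rV[R]_n) k : (n <= k)%N -> ext0 v k = 0.
Proof. by move=> h; rewrite /ext0 insubF // ltnNge h. Qed.

Lemma ext0D (u v : 'rV[R]_n) : ext0 (u + v) = (fun k => ext0 u k + ext0 v k).
Proof.
apply: funext => k; case: (ltnP k n) => h; first by rewrite !(ext0_lt _ h) mxE.
by rewrite !ext0_ge // addr0.
Qed.

Lemma ext0Z a (v : 'rV[R]_n) : ext0 (a *: v) = (fun k => a * ext0 v k).
Proof.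
apply: funext => k; case: (ltnP k n) => h; first by rewrite !(ext0_lt _ h) mxE.
by rewrite !ext0_ge // mulr0.
Qed.

Definition ind (m : nat) : nat -> R := fun k => if (k < m)%N then 1 else 0.

Lemma ydom_ind m : ydom Y (ind m).
Proof.
elim: m => [|m IH].
  have -> : ind 0 = (fun _ => 0) by apply: funext => k; rewrite /ind ltn0.
  exact: ydom0.
have -> : ind m.+1 = (fun k => ind m k + unit_seq R m k).
  apply: funext => k; rewrite /ind /unit_seq ltnS leq_eqVlt.
  by case: (ltngtP k m) => h; rewrite ?h ?eqxx ?addr0 ?add0r /= ?(gtn_eqF h) ?(ltn_eqF h) ?orbF ?addr0 ?add0r.
by apply: ydomD => //; exact: yunit.
Qed.

Lemma ext0_bound (v : 'rV[R]_n) k : `|ext0 v k| <= `|(`|v| * ind n k)|.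
Proof.
case: (ltnP k n) => h.
  by rewrite (ext0_lt _ h) /ind h mulr1 normr_id; exact: entry_le.
by rewrite ext0_ge // normr0.
Qed.

Lemma ydom_ext0 (v : 'rV[R]_n) : ydom Y (ext0 v).
Proof.
have := yideal (ydomZ `|v| (ydom_ind n)) (ext0_bound v); by case.
Qed.

Lemma N_le_ind (v : 'rV[R]_n) : N v <= `|v| * ynorm Y (ind n).
Proof.
have [_ H] := yideal (ydomZ `|v| (ydom_ind n)) (ext0_bound v).
apply: (le_trans H); rewrite ynormZ; last exact: ydom_ind.
by rewrite ger0_norm.
Qed.

Lemma ND (u v : 'rV[R]_n) : N (u + v) <= N u + N v.
Proof. by rewrite /Ynorm_n ext0D; apply: ynormD; exact: ydom_ext0. Qed.

Lemma NZ a (v : 'rV[R]_n) : N (a *: v) = `|a| * N v.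
Proof. by rewrite /Ynorm_n ext0Z ynormZ //; exact: ydom_ext0. Qed.

Lemma NN (v : 'rV[R]_n) : N (- v) = N v.
Proof. by rewrite -scaleN1r NZ normrN normr1 mul1r. Qed.

Lemma N_ge0 (v : 'rV[R]_n) : 0 <= N v.
Proof.
have := ND v (- v); rewrite subrr NN.
have -> : N 0 = 0 by rewrite -(scale0r v) NZ normr0 mul0r.
lra.
Qed.

Lemma N_mono (u v : 'rV[R]_n) : (forall j, `|u ord0 j| <= `|v ord0 j|) -> N u <= N v.
Proof.
move=> H.
have Hk : forall k, `|ext0 u k| <= `|ext0 v k|.
  move=> k; case: (ltnP k n) => h; first by rewrite !(ext0_lt _ h).
  by rewrite !ext0_ge // normr0.
by have [_ H'] := @yideal R Y (ext0 u) (ext0 v) (ydom_ext0 v) Hk.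
Qed.

Definition Kn : R := ynorm Y (ind n) + 1.

Lemma ynorm_ge0 f : ydom Y f -> 0 <= ynorm Y f.
Proof.
move=> Df.
have h0 : ynorm Y (fun k => 0 * f k) = 0 by rewrite ynormZ // normr0 mul0r.
have hN : ynorm Y (fun k => -1 * f k) = ynorm Y f by rewrite ynormZ // normrN normr1 mul1r.
have := ynormD Df (ydomZ (-1) Df).
have -> : (fun k => f k + -1 * f k) = (fun k => 0 * f k).
  by apply: funext => k; rewrite mul0r mulN1r subrr.
rewrite h0 hN; lra.
Qed.

Lemma Kn_gt0 : 0 < Kn.
Proof. by have := ynorm_ge0 (ydom_ind n); rewrite /Kn; lra. Qed.

Lemma N_lip (u v : 'rV[R]_n) : `|N u - N v| <= Kn * `|u - v|.
Proof.
have h1 := ND (u - v) v; rewrite subrK in h1.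
have h2 := ND (v - u) u; rewrite subrK -opprB NN in h2.
have h3 := N_le_ind (u - v).
have h4 : 0 <= `|u - v| by [].
have h5 : `|u - v| * ynorm Y (ind n) <= Kn * `|u - v|.
  by rewrite mulrC /Kn ler_wpM2r // lerDl.
rewrite ler_norml; apply/andP; split; lra.
Qed.

Lemma Hn_N : @Hn R n N.
Proof.
split; first exact: (lip_cont Kn_gt0 N_lip).
by move=> t v t0; rewrite NZ ger0_norm.
Qed.

End Nsec.
Section HBsec.
Variables (R : realType) (V : lmodType R) (p : V -> R).
Hypotheses (pD : forall x y, p (x + y) <= p x + p y)
  (pZ : forall t x, 0 <= t -> p (t *: x) = t * p x).

Definition subsp (D : set V) := D 0 /\ forall a x y, D x -> D y -> D (a *: x + y).
Definition linon (D : set V) (f : V -> R) :=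
  forall a x y, D x -> D y -> f (a *: x + y) = a * f x + f y.
Definition addl (D : set V) (y : V) := [set z | exists m t, D m /\ z = m + t *: y].

Lemma p0 : p 0 = 0.
Proof. by have := pZ 0 (lexx 0); rewrite scale0r mul0r. Qed.

Lemma subspN D x : subsp D -> D x -> D (- x).
Proof. by move=> [D0 DD] Dx; have := DD (-1) x 0 Dx D0; rewrite addr0 scaleN1r. Qed.

Lemma subspD D x y : subsp D -> D x -> D y -> D (x + y).
Proof. by move=> [D0 DD] Dx Dy; have := DD 1 x y Dx Dy; rewrite scale1r. Qed.

Lemma subspZ D a x : subsp D -> D x -> D (a *: x).
Proof. by move=> [D0 DD] Dx; have := DD a x 0 Dx D0; rewrite addr0. Qed.

Lemma linon0 D f : subsp D -> linon D f -> f 0 = 0.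
Proof.
move=> [D0 _] lf; have := lf 1 0 0 D0 D0; rewrite scale1r addr0 mul1r.
by move=> E; apply: (addrI (f 0)); rewrite addr0 -E.
Qed.

Lemma linonD D f x y : subsp D -> linon D f -> D x -> D y -> f (x + y) = f x + f y.
Proof. by move=> sD lf Dx Dy; have := lf 1 x y Dx Dy; rewrite scale1r mul1r. Qed.

Lemma linonZ D f a x : subsp D -> linon D f -> D x -> f (a *: x) = a * f x.
Proof.
move=> sD lf Dx; have := lf a x 0 Dx sD.1; rewrite addr0 => ->.
by rewrite (linon0 sD lf) addr0.
Qed.

Lemma subsp_addl D y : subsp D -> subsp (addl D y).
Proof.
move=> sD; split; first by exists 0, 0; rewrite scale0r addr0; split => //; exact: sD.1.
move=> a _ _ [m1 [t1 [Dm1 ->]]] [m2 [t2 [Dm2 ->]]].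
exists (a *: m1 + m2), (a * t1 + t2); split; first exact: sD.2.
by rewrite scalerDr scalerA scalerDl addrACA.
Qed.

Lemma addl_sub D y : subsp D -> D `<=` addl D y.
Proof. by move=> sD x Dx; exists x, 0; rewrite scale0r addr0. Qed.

Lemma addl_y D y : subsp D -> addl D y y.
Proof. by move=> sD; exists 0, 1; rewrite scale1r add0r; split => //; exact: sD.1. Qed.

Definition gext (D : set V) (f : V -> R) (y : V) (c : R) (z : V) : R :=
  match pselect (exists mt : V * R, D mt.1 /\ z = mt.1 + mt.2 *: y) with
  | left H => let mt := proj1_sig (cid H) in f mt.1 + mt.2 * c
  | right _ => 0 end.

Lemma addl_uniq D y m t m' t' : subsp D -> ~ D y -> D m -> D m' ->
  m + t *: y = m' + t' *: y -> m = m' /\ t = t'.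
Proof.
move=> sD Dy Dm Dm' E.
have E2 : (t - t') *: y = m' - m.
  have -> : m' = m + t *: y - t' *: y by rewrite E addrK.
  by rewrite scalerBl [in RHS]addrAC [m + _]addrC addrK.
have tt : t = t'.
  apply/eqP; rewrite -subr_eq0; apply/negP => /negP nz; apply: Dy.
  have -> : y = (t - t')^-1 *: (m' - m) by rewrite -E2 scalerA mulVf // scale1r.
  by apply: subspZ => //; apply: subspD => //; exact: subspN.
split=> //; move: E; rewrite tt; exact: addIr.
Qed.

Lemma gextE D f y c m t : subsp D -> ~ D y -> D m ->
  gext D f y c (m + t *: y) = f m + t * c.
Proof.
move=> sD Dy Dm; rewrite /gext; case: pselect => [H|H]; last first.
  by exfalso; apply: H; exists (m, t).
case: (cid H) => [[m' t'] [/= Dm' E]] /=.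
by have [-> ->] := addl_uniq sD Dy Dm' Dm (esym E).
Qed.

Lemma step D f y c : subsp D -> linon D f -> (forall x, D x -> f x <= p x) ->
  (forall m, D m -> f m - p (m - y) <= c) -> (forall m, D m -> c <= p (m + y) - f m) ->
  exists g, [/\ linon (addl D y) g, (forall x, D x -> g x = f x),
    (forall x, addl D y x -> g x <= p x) & (~ D y -> g y = c)].
Proof.
move=> sD lf fp cA cB.
have [Dy|nDy] := pselect (D y).
  have sub : addl D y `<=` D.
    by move=> _ [m [t [Dm ->]]]; apply: subspD => //; exact: subspZ.
  exists f; split => //.
  - by move=> a x z /sub Dx /sub Dz; exact: lf.
  - by move=> x /sub; exact: fp.
exists (gext D f y c); split => //.
- move=> a _ _ [m1 [t1 [Dm1 ->]]] [m2 [t2 [Dm2 ->]]].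
  have -> : a *: (m1 + t1 *: y) + (m2 + t2 *: y) = (a *: m1 + m2) + (a * t1 + t2) *: y.
    by rewrite scalerDr scalerA scalerDl addrACA.
  rewrite !gextE //; last by apply: sD.2.
  rewrite (lf a m1 m2 Dm1 Dm2); ring.
- move=> x Dx; have := gextE f c 0 sD nDy Dx.
  by rewrite scale0r addr0 mul0r addr0.
- move=> _ [m [t [Dm ->]]]; rewrite gextE //.
  have [t0|tn0] := eqVneq t 0.
    by rewrite t0 scale0r addr0 mul0r addr0; exact: fp.
  have [tgt|tlt] := ltP 0 t.
    have Dm2 : D (t^-1 *: m) by exact: subspZ.
    have := cB _ Dm2; rewrite (linonZ _ sD lf Dm) lerBrDr => H.
    have -> : m + t *: y = t *: (t^-1 *: m + y).
      by rewrite scalerDr scalerA mulfV // scale1r.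
    rewrite pZ; last exact: ltW.
    apply: le_trans (ler_wpM2l (ltW tgt) H).
    by rewrite mulrDr mulrA mulfV ?gt_eqF // mul1r addrC.
  have sgt : 0 < - t by rewrite oppr_gt0 lt_neqAle tn0 tlt.
  have Dm2 : D ((- t)^-1 *: m) by exact: subspZ.
  have := cA _ Dm2; rewrite (linonZ _ sD lf Dm) lerBlDr => H.
  have -> : m + t *: y = (- t) *: ((- t)^-1 *: m - y).
    by rewrite scalerDr scalerA mulfV ?oppr_eq0 // scale1r scalerN scaleNr opprK.
  rewrite pZ; last exact: ltW.
  have H2 := ler_wpM2l (ltW sgt) H.
  have E : - t * ((- t)^-1 * f m) = f m by rewrite mulrA mulfV ?oppr_eq0 // mul1r.
  have : f m + t * c <= - t * ((- t)^-1 * f m) - - t * c by rewrite E mulNr opprK.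
  move=> /le_trans; apply; rewrite lerBlDr -mulrDr.
  by rewrite addrC.
- by move=> _; have := gextE f c 1 sD nDy sD.1; rewrite scale1r add0r (linon0 sD lf) mul1r add0r.
Qed.

Fixpoint spanl (D : set V) (ys : seq V) : set V :=
  match ys with [::] => D | y :: ys' => spanl (addl D y) ys' end.

Lemma spanl_subsp ys D : subsp D -> subsp (spanl D ys).
Proof. by elim: ys D => [|y ys IH] D sD //=; apply: IH; exact: subsp_addl. Qed.

Lemma spanl_sub ys D : subsp D -> D `<=` spanl D ys.
Proof.
elim: ys D => [|y ys IH] D sD //= x Dx; apply: IH; first exact: subsp_addl.
exact: addl_sub.
Qed.

Lemma spanl_mem ys D y : subsp D -> y \in ys -> spanl D ys y.
Proof.
elim: ys D => [|z ys IH] D sD //=; rewrite in_cons => /orP [/eqP ->|yin].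
  by apply: spanl_sub; [exact: subsp_addl | exact: addl_y].
by apply: IH => //; exact: subsp_addl.
Qed.

Lemma ext_list ys : forall D f, subsp D -> linon D f -> (forall x, D x -> f x <= p x) ->
  exists g, [/\ linon (spanl D ys) g, (forall x, D x -> g x = f x) &
     (forall x, spanl D ys x -> g x <= p x)].
Proof.
elim: ys => [|y ys IH] D f sD lf fp /=; first by exists f.
pose A := [set f m - p (m - y) | m in D].
have key : forall m m', D m -> D m' -> f m - p (m - y) <= p (m' + y) - f m'.
  move=> m m' Dm Dm'.
  have E : f (m + m') = f m + f m' by apply: (linonD sD lf).
  have F := fp _ (subspD sD Dm Dm').
  have G : p (m + m') <= p (m - y) + p (m' + y).
    by have := pD (m - y) (m' + y); rewrite addrACA addNr addr0.
  lra.
have hA : has_sup A.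
  split; first by exists (f 0 - p (0 - y)); exists 0 => //; exact: sD.1.
  exists (p (0 + y) - f 0) => _ [m Dm <-]; apply: key => //; exact: sD.1.
have cA : forall m, D m -> f m - p (m - y) <= sup A.
  by move=> m Dm; apply: sup_upper_bound => //; exists m.
have cB : forall m, D m -> sup A <= p (m + y) - f m.
  move=> m' Dm'; apply: ge_sup; first exact: hA.1.
  by move=> _ [m Dm <-]; exact: key.
have [g1 [lg1 g1f g1p _]] := step sD lf fp cA cB.
have [g [lg gg1 gp]] := IH _ g1 (subsp_addl y sD) lg1 g1p.
exists g; split => // x Dx; rewrite gg1 ?g1f //; exact: addl_sub.
Qed.

Lemma hb_full (a : V) (ys : seq V) :
  (forall v, spanl (addl [set 0] a) ys v) ->
  exists g : V -> R, [/\ (forall t u v, g (t *: u + v) = t * g u + g v),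
    (forall v, g v <= p v) & g a = p a].
Proof.
move=> full.
have s0 : subsp [set 0] by split => // t x z -> ->; rewrite scaler0 addr0.
have l0 : linon [set 0] (fun _ => 0) by move=> *; rewrite mulr0 addr0.
have f0 : forall x, [set 0] x -> (fun _ : V => (0:R)) x <= p x.
  by move=> x ->; rewrite p0.
have cA : forall m, [set 0] m -> (fun _ : V => (0:R)) m - p (m - a) <= p a.
  move=> m -> /=; have := pD a (0 - a); rewrite add0r subrr p0; lra.
have cB : forall m, [set 0] m -> p a <= p (m + a) - (fun _ : V => (0:R)) m.
  by move=> m -> /=; rewrite add0r subr0.
have [g1 [lg1 g1f g1p g1a]] := step s0 l0 f0 cA cB.
have [g [lg gg1 gp]] := ext_list ys (subsp_addl a s0) lg1 g1p.
exists g; split.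
- by move=> t u v; apply: lg; apply: full.
- by move=> v; apply: gp.
- rewrite gg1; last exact: addl_y.
  have [->|na] := eqVneq a 0; last by apply: g1a => /= E; rewrite E eqxx in na.
  by rewrite g1f // p0.
Qed.
End HBsec.

Lemma Hn_comb (R : realType) n (a b : R) (f g : 'rV[R]_n -> R) :
  Hn f -> Hn g -> Hn (fun v => a * f v + b * g v).
Proof.
move=> [cf hf] [cg hg]; split.
  move=> v; apply: (@continuousD _ _ _ (fun v => a * f v) (fun v => b * g v)).
    exact: (@continuousZl_tmp _ _ _ f a v (cf v)).
  exact: (@continuousZl_tmp _ _ _ g b v (cg v)).
by move=> t v t0; rewrite hf // hg // mulrDr !mulrA [a * t]mulrC [b * t]mulrC.
Qed.

Lemma Hn_proj (R : realType) n (i : 'I_n) : Hn (fun v : 'rV[R]_n => v ord0 i).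
Proof.
split; last by move=> t v _; rewrite mxE.
apply: (@lip_cont _ _ _ _ 1 ltr01) => u v; rewrite mul1r.
by have := entry_le (u - v) i; rewrite !mxE.
Qed.

Lemma Hn_0 (R : realType) n : Hn (fun v : 'rV[R]_n => (0 : R)).
Proof.
split; last by move=> t v _; rewrite mulr0.
by apply: (@lip_cont _ _ _ _ 1 ltr01) => u v; rewrite subrr normr0 mul1r.
Qed.

Lemma Hn_lin (R : realType) n (b : 'I_n -> R) (s : seq 'I_n) :
  Hn (fun v : 'rV[R]_n => \sum_(j <- s) b j * v ord0 j).
Proof.
elim: s => [|i s IH].
  have -> : (fun v : 'rV[R]_n => \sum_(j <- [::]) b j * v ord0 j) = (fun _ => 0)
    by apply: funext => v; rewrite big_nil.
  exact: Hn_0.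
have -> : (fun v : 'rV[R]_n => \sum_(j <- i :: s) b j * v ord0 j) =
   (fun v => b i * v ord0 i + 1 * \sum_(j <- s) b j * v ord0 j).
  by apply: funext => v; rewrite big_cons mul1r.
by apply: Hn_comb => //; exact: Hn_proj.
Qed.

Section Krivine.
Variables (R : realType) (X : completeNormedModType R) (L : banach_lattice X)
  (n : nat) (x : 'I_n -> X) (tau : ('rV[R]_n -> R) -> X).
Hypothesis kt : is_krivine L x tau.

Lemma tau_lin f g a b : Hn f -> Hn g ->
  tau (fun v => a * f v + b * g v) = a *: tau f + b *: tau g.
Proof. by case: kt => H _ _; exact: H. Qed.

Lemma tau_opp f : Hn f -> tau (fun v => - f v) = - tau f.
Proof.
move=> hf; have := tau_lin (-1) 0 hf hf; rewrite scale0r addr0 scaleN1r => <-.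
by congr tau; apply: funext => v; rewrite mul0r addr0 mulN1r.
Qed.

Lemma Hn_opp (f : 'rV[R]_n -> R) : Hn f -> Hn (fun v => - f v).
Proof.
move=> hf; have := Hn_comb (-1) 0 hf hf.
by have -> : (fun v => -1 * f v + 0 * f v) = (fun v => - f v)
  by apply: funext => v; rewrite mul0r addr0 mulN1r.
Qed.

Lemma tau_le f g : Hn f -> Hn g -> (forall v, f v <= g v) -> ble L (tau f) (tau g).
Proof.
move=> hf hg fg; case: kt => _ _ H.
have E : (fun v => Num.max (f v) (g v)) = g by apply: funext => v; rewrite max_r.
have := H f g hf hg; rewrite E => ->; exact: bsup_ubl.
Qed.

Lemma tau_norm f g : Hn f -> Hn g -> (forall v, `|f v| <= g v) -> `|tau f| <= `|tau g|.
Proof.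
move=> hf hg fg; apply: (@bnorm_mono R X L); apply: bsup_least.
  apply: (ble_trans _ (bsup_ubl L _ _)); apply: tau_le => // v.
  exact: le_trans (ler_norm _) (fg v).
rewrite -tau_opp //; apply: (ble_trans _ (bsup_ubl L _ _)); apply: tau_le => //.
  exact: Hn_opp.
by move=> v; have := fg v; rewrite ler_norml => /andP[h1 _]; rewrite lerNl.
Qed.

Lemma tau_sum (b : 'I_n -> R) (s : seq 'I_n) :
  tau (fun v => \sum_(j <- s) b j * v ord0 j) = \sum_(j <- s) b j *: x j.
Proof.
elim: s => [|i s IH].
  rewrite big_nil; have := tau_lin 0 0 (@Hn_0 R n) (@Hn_0 R n).
  rewrite !scale0r addr0 => <-.
  by congr tau; apply: funext => v; rewrite big_nil mul0r addr0.
have -> : (fun v : 'rV[R]_n => \sum_(j <- i :: s) b j * v ord0 j) =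
   (fun v => b i * v ord0 i + 1 * \sum_(j <- s) b j * v ord0 j).
  by apply: funext => v; rewrite big_cons mul1r.
rewrite tau_lin; [|exact: Hn_proj|exact: Hn_lin].
rewrite IH scale1r big_cons; congr (_ + _); case: kt => _ H _; by rewrite H.
Qed.

End Krivine.

Lemma lin_sum (R : realType) (V W : lmodType R) (g : V -> W) (I : Type) (s : seq I) (F : I -> V) :
  (forall t u v, g (t *: u + v) = t *: g u + g v) ->
  g (\sum_(j <- s) F j) = \sum_(j <- s) g (F j).
Proof.
move=> lg.
have g0 : g 0 = 0.
  have := lg 1 0 0; rewrite scale1r addr0 scale1r => E.
  by apply: (addrI (g 0)); rewrite addr0 -E.
elim: s => [|i s IH]; first by rewrite !big_nil.
by rewrite !big_cons -IH; have := lg 1 (F i) (\sum_(j <- s) F j); rewrite !scale1r.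
Qed.

Lemma lin_repr (R : realType) n (g : 'rV[R]_n -> R) :
  (forall t u v, g (t *: u + v) = t * g u + g v) ->
  forall v, g v = \sum_(j < n) g (delta_mx 0 j) * v ord0 j.
Proof.
move=> lg v; rewrite {1}(row_sum_delta v) (@lin_sum R _ R^o g) //.
apply: eq_bigr => j _; rewrite -[_ *: _]addr0 lg.
have -> : g 0 = 0.
  have := lg 1 0 0; rewrite scale1r addr0 mul1r => E.
  by apply: (addrI (g 0)); rewrite addr0 -E.
by rewrite addr0 mulrC.
Qed.

Section Dual.
Variables (R : realType) (X : completeNormedModType R) (L : banach_lattice X)
  (Y : seq_lattice R) (n : nat) (x : 'I_n -> X) (tau : ('rV[R]_n -> R) -> X).
Hypothesis kt : is_krivine L x tau.
Local Notation N := (@Ynorm_n R Y n).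

Lemma dual (phi : X -> R) (K : R) : 0 <= K ->
  (forall a u w, phi (a *: u + w) = a * phi u + phi w) ->
  (forall u, `|phi u| <= K * `|u|) ->
  N (\row_j phi (x j)) <= K * `|tau N|.
Proof.
move=> K0 lphi bphi; set a := \row_j phi (x j).
have pD : forall u v, N (u + v) <= N u + N v by exact: ND.
have pZ : forall t v, 0 <= t -> N (t *: v) = t * N v.
  by move=> t v t0; rewrite NZ ger0_norm.
pose ys := [seq (delta_mx 0 j : 'rV[R]_n) | j <- enum 'I_n].
have s0 : subsp [set (0 : 'rV[R]_n)] by split => // t u z -> ->; rewrite scaler0 addr0.
have sD := spanl_subsp ys (subsp_addl a s0).
have full : forall v, spanl (addl [set 0] a) ys v.
  move=> v; rewrite (row_sum_delta v).
  apply: (big_ind (spanl (addl [set 0] a) ys)); first exact: sD.1.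
    by move=> u w Du Dw; exact: subspD.
  move=> j _; apply: subspZ => //; apply: spanl_mem; first exact: subsp_addl.
  by apply: map_f; rewrite mem_enum.
have [g [lg gp ga]] := hb_full pD pZ full.
pose b := fun j => g (delta_mx 0 j).
pose h := fun v : 'rV[R]_n => \sum_(j < n) b j * v ord0 j.
have gh : forall v, g v = h v by move=> v; rewrite (lin_repr lg).
have Hh : Hn h by exact: Hn_lin.
have hN : forall v, `|h v| <= N v.
  move=> v; rewrite ler_norml; apply/andP; split; last by rewrite -gh.
  rewrite lerNl -NN -gh.
  have -> : - g v = g (- v).
    have := lg (-1) v 0; rewrite addr0 scaleN1r => ->.
    have -> : g 0 = 0.
      have := lg 1 0 0; rewrite scale1r addr0 mul1r => E.
      by apply: (addrI (g 0)); rewrite addr0 -E.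
    by rewrite addr0 mulN1r.
  exact: gp.
have th : tau h = \sum_(j < n) b j *: x j by rewrite /h (tau_sum kt).
have pth : phi (tau h) = N a.
  rewrite th (@lin_sum R X R^o phi); last first.
    by move=> t u w; rewrite lphi.
  rewrite -ga gh /h; apply: eq_bigr => j _.
  rewrite -[_ *: _]addr0 lphi mxE.
  have -> : phi 0 = 0.
    have := lphi 1 0 0; rewrite scale1r addr0 mul1r => E.
    by apply: (addrI (phi 0)); rewrite addr0 -E.
  by rewrite addr0.
rewrite -pth; apply: le_trans (ler_norm _) _; apply: le_trans (bphi _) _.
apply: ler_wpM2l => //; apply: (tau_norm kt Hh) => //; exact: Hn_N.
Qed.
End Dual.
Section FinDim.
Variables (R : realType) (E : normedModType R).

Definition Tm (s : seq E) (d : 'rV[R]_(size s)) : E :=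
  \sum_(i < size s) d ord0 i *: s`_i.
Arguments Tm : clear implicits.

Definition indep (s : seq E) := forall d, Tm s d = 0 -> d = 0.
Definition inspan (s : seq E) (v : E) := exists d, v = Tm s d.

Lemma Tm_lin s a d d' : Tm s (a *: d + d') = a *: Tm s d + Tm s d'.
Proof.
rewrite /Tm scaler_sumr -big_split; apply: eq_bigr => i _.
by rewrite !mxE scalerDl scalerA.
Qed.

Lemma Tm0 s : Tm s 0 = 0.
Proof. by rewrite /Tm big1 // => i _; rewrite mxE scale0r. Qed.

Definition rtail m (d : 'rV[R]_m.+1) : 'rV[R]_m := \row_j d ord0 (lift ord0 j).
Definition crow m (c : R) (d : 'rV[R]_m) : 'rV[R]_m.+1 :=
  \row_i (match unlift ord0 i with Some j => d ord0 j | None => c end).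

Lemma crow0 m c (d : 'rV[R]_m) : crow c d ord0 ord0 = c.
Proof. by rewrite mxE unlift_none. Qed.

Lemma rtail_crow m c (d : 'rV[R]_m) : rtail (crow c d) = d.
Proof. by apply/rowP => j; rewrite !mxE liftK. Qed.

Lemma Tm_cons e s (d : 'rV[R]_(size s).+1) :
  Tm (e :: s) d = d ord0 ord0 *: e + Tm s (rtail d).
Proof.
rewrite /Tm /= big_ord_recl /=; congr (_ + _).
by apply: eq_bigr => j _; rewrite mxE.
Qed.

Lemma extract s : exists s', indep s' /\ forall v, inspan s v -> inspan s' v.
Proof.
elim: s => [|e s [s' [ind sub]]].
  exists [::]; split => //; first by move=> d _; apply/rowP => -[].
have [[de Ede]|ne] := pselect (inspan s' e).
  exists s'; split => // v [d ->]; rewrite Tm_cons.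
  have [d2 E2] := sub _ (ex_intro _ (rtail d) erefl).
  by exists (d ord0 ord0 *: de + d2); rewrite Tm_lin -Ede -E2.
exists (e :: s'); split; last first.
  move=> v [d ->]; rewrite Tm_cons.
  have [d2 E2] := sub _ (ex_intro _ (rtail d) erefl).
  by exists (crow (d ord0 ord0) d2); rewrite Tm_cons crow0 rtail_crow -E2.
move=> d; rewrite Tm_cons => E0.
have d00 : d ord0 ord0 = 0.
  apply/eqP; apply/negP => /negP nz; apply: ne.
  exists (- (d ord0 ord0)^-1 *: rtail d).
  rewrite -[_ *: _]addr0 Tm_lin Tm0 addr0.
  apply: (scalerI nz); rewrite scalerA mulrN mulfV // scaleN1r.
  by apply/eqP; rewrite -addr_eq0 E0.
move: E0; rewrite d00 scale0r add0r => /ind tl.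
apply/rowP => -[[|k] hk]; rewrite mxE.
  by rewrite -d00; congr (d ord0 _); apply: val_inj.
have hk' : (k < size s')%N by [].
have := congr1 (fun r : 'rV[R]_(size s') => r ord0 (Ordinal hk')) tl; rewrite !mxE => <-.
by congr (d _ _); apply: val_inj.
Qed.

Lemma TmZ s a d : Tm s (a *: d) = a *: Tm s d.
Proof. by rewrite -[a *: d]addr0 Tm_lin Tm0 addr0. Qed.

Lemma TmB s d d' : Tm s d - Tm s d' = Tm s (d - d').
Proof.
have := Tm_lin 1 d ((-1) *: d'); rewrite !scale1r scaleN1r => ->.
by rewrite -scaleN1r TmZ scaleN1r.
Qed.

Lemma Tm_le s d : `|Tm s d| <= `|d| * \sum_(i < size s) `|s`_i|.
Proof.
rewrite /Tm mulr_sumr; apply: le_trans (ler_norm_sum _ _ _) _.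
apply: ler_sum => i _; rewrite normrZ ler_wpM2r //.
by rewrite [leRHS]/Num.norm /= mx_normrE; apply/bigmax_geP; right => /=; exists (ord0, i).
Qed.

Lemma Tm_cont s : continuous (Tm s).
Proof.
have k0 : 0 < 1 + \sum_(i < size s) `|s`_i|.
  by apply: (lt_le_trans ltr01); rewrite lerDl; apply: sumr_ge0 => i _.
apply: (lip_cont k0) => d d'; rewrite TmB; apply: le_trans (Tm_le _) _.
by rewrite mulrC ler_wpM2r // lerDr.
Qed.

Lemma coord_bound s : indep s -> exists mu, 0 < mu /\ forall d, mu * `|d| <= `|Tm s d|.
Proof.
move=> ind.
pose Sph := [set d : 'rV[R]_(size s) | `|d| = 1].
have cS : compact Sph.
  apply: bounded_closed_compact.
    exists 1; split; first exact: num_real.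
    by move=> M M1 d /= ->; exact: ltW.
  apply: (@preimage_closed _ _ (fun d : 'rV[R]_(size s) => `|d|) [set x | x = 1]).
    by move=> x _; exact: norm_continuous.
  exact: closed_eq.
pose f := fun d => `|Tm s d|.
have fc : continuous f.
  by move=> x; apply: continuous_comp; [exact: Tm_cont | exact: norm_continuous].
have cI : compact (f @` Sph) by apply: continuous_compact => //; exact: continuous_subspaceT.
have clI : closed (f @` Sph) by apply: compact_closed.
have n0 : ~ (f @` Sph) 0.
  move=> [d Sd /eqP]; rewrite /f normr_eq0 => /eqP /ind d0.
  by move: Sd; rewrite /Sph /= d0 normr0 => /eqP; rewrite eq_sym oner_eq0.
have op : open (~` (f @` Sph)) by rewrite openC.
have nb : nbhs (0:R) (~` (f @` Sph)) by apply: open_nbhs_nbhs; split.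
move: nb => /nbhs_ballP [e e0 He].
exists e; split => // d.
have [->|dn0] := eqVneq d 0; first by rewrite normr0 mulr0.
have nd : 0 < `|d| by rewrite normr_gt0.
have Sd : Sph (`|d|^-1 *: d) by rewrite /Sph /= normrZ normrV ?unitfE ?normr_eq0 // normr_id mulVf // normr_eq0.
have : ~ ball (0:R) e (f (`|d|^-1 *: d)) by move=> /He; apply; exists (`|d|^-1 *: d).
rewrite /ball /= sub0r normrN /f TmZ normrZ normrV ?unitfE ?normr_eq0 // normr_id.
rewrite ger0_norm; last by rewrite mulr_ge0 // invr_ge0.
move=> /negP; rewrite -leNgt mulrC ler_pdivlMr // mulrC.
Qed.
End FinDim.
Arguments Tm {R E} s d.

Section Span.
Variables (R : realType) (E : normedModType R).

Lemma inspan0 (s : seq E) : inspan s 0.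
Proof. by exists 0; rewrite Tm0. Qed.

Lemma inspanD (s : seq E) u v : inspan s u -> inspan s v -> inspan s (u + v).
Proof. by move=> [d ->] [d' ->]; exists (d + d'); rewrite -[d]scale1r Tm_lin !scale1r. Qed.

Lemma inspanZ (s : seq E) a u : inspan s u -> inspan s (a *: u).
Proof. by move=> [d ->]; exists (a *: d); rewrite TmZ. Qed.

Lemma inspan_nth (s : seq E) (k : 'I_(size s)) : inspan s s`_k.
Proof.
exists (delta_mx 0 k); rewrite /Tm (bigD1 k) //= big1 ?addr0.
  by rewrite mxE !eqxx scale1r.
by move=> i ik; rewrite mxE (negbTE ik) andbF scale0r.
Qed.

Lemma inspan_mem (s : seq E) v : v \in s -> inspan s v.
Proof.
move=> vs; have hk : (index v s < size s)%N by rewrite index_mem.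
rewrite -(nth_index 0 vs).
have -> : index v s = Ordinal hk by [].
exact: inspan_nth.
Qed.

End Span.

Lemma N_sum (R : realType) (Y : seq_lattice R) n (I : Type) (r : seq I) (v : I -> 'rV[R]_n) :
  Ynorm_n Y (\sum_(i <- r) v i) <= \sum_(i <- r) Ynorm_n Y (v i).
Proof.
elim: r => [|i r IH].
  by rewrite !big_nil -(scale0r (0 : 'rV[R]_n)) NZ normr0 mul0r.
by rewrite !big_cons; apply: le_trans (ND _ _ _) _; rewrite lerD2l.
Qed.

Lemma N_abs (R : realType) (Y : seq_lattice R) n (u : 'rV[R]_n) :
  Ynorm_n Y (\row_j `|u ord0 j|) = Ynorm_n Y u.
Proof. by apply/le_anti/andP; split; apply: N_mono => j; rewrite mxE normr_id. Qed.

Theorem mainTheorem17 (R : realType) (X : completeNormedModType R)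
  (L : banach_lattice X) (E : completeNormedModType R) (Y : seq_lattice R)
  (S : X -> E) :
  is_linear S -> is_bounded S -> finite_rank S -> Y_concave L Y S.
Proof.
move=> lS [C hC] [m [e he]].
pose s := [seq e i | i <- enum 'I_m].
have spS : forall x, inspan s (S x).
  move=> x; have [c ->] := he x.
  apply: (big_ind (inspan s)); [exact: inspan0 | exact: inspanD|].
  move=> i _; apply: inspanZ; apply: inspan_mem; apply: map_f; by rewrite mem_enum.
have [s' [ind sub]] := extract s.
have [mu [mu0 hmu]] := coord_bound ind.
have spS' : forall x, inspan s' (S x) by move=> x; exact: sub.
pose cv x := proj1_sig (cid (spS' x)).
have cvE : forall x, S x = Tm s' (cv x) by move=> x; exact: (proj2_sig (cid (spS' x))).
have uniq : forall d d', Tm s' d = Tm s' d' -> d = d'.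
  move=> d d' E0; apply/eqP; rewrite -subr_eq0; apply/eqP; apply: ind.
  by rewrite -TmB E0 subrr.
have cvL : forall a u w, cv (a *: u + w) = a *: cv u + cv w.
  by move=> a u w; apply: uniq; rewrite Tm_lin -!cvE; exact: lS.
pose Kc := `|C| / mu.
have Kc0 : 0 <= Kc by rewrite /Kc divr_ge0 // ltW.
have cvB : forall u i, `|cv u ord0 i| <= Kc * `|u|.
  move=> u i; apply: le_trans (entry_le (cv u) i) _.
  rewrite /Kc mulrAC ler_pdivlMr // mulrC; apply: le_trans (hmu _) _.
  rewrite -cvE; apply: le_trans (hC u) _; rewrite ler_wpM2r //; exact: ler_norm.
pose K := 1 + \sum_(i < size s') `|s'`_i| * Kc.
exists K; split.
  by rewrite /K; apply: (lt_le_trans ltr01); rewrite lerDl; apply: sumr_ge0 => i _; rewrite mulr_ge0.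
move=> n x tau kt.
pose phi i := fun u => cv u ord0 i.
have hphi : forall i, Ynorm_n Y (\row_j phi i (x j)) <= Kc * `|tau (@Ynorm_n R Y n)|.
  move=> i; apply: (@dual R X L Y n x tau kt (phi i) Kc Kc0).
    by move=> a u w; rewrite /phi cvL !mxE.
  by move=> u; exact: cvB.
rewrite /EYnorm.
apply: le_trans (_ : Ynorm_n Y (\sum_(i < size s') `|s'`_i| *: \row_j `|phi i (x j)|) <= _).
  apply: N_mono => j; rewrite !mxE summxE normr_id.
  apply: le_trans _ (ler_norm _); rewrite cvE /Tm.
  apply: le_trans (ler_norm_sum _ _ _) _; apply: ler_sum => i _.
  by rewrite !mxE normrZ mulrC.
apply: le_trans (N_sum _ _ _) _.
apply: le_trans (_ : _ <= \sum_(i < size s') `|s'`_i| * Kc * `|tau (@Ynorm_n R Y n)|) _.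
  apply: ler_sum => i _; rewrite NZ normr_id.
  have -> : \row_j `|phi i (x j)| = \row_j `|(\row_k phi i (x k)) ord0 j| by apply/rowP => j; rewrite !mxE.
  rewrite N_abs -mulrA; apply: ler_wpM2l => //.
by rewrite -mulr_suml /K mulrDl mul1r lerDr.
Qed.
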